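(* For every mixed graph $G$ without directed cycles, $\mathrm{nd}_{\mathrm m}(G^+)\le\mathrm{nd}_{\mathrm m}(G)$ and $\mathrm{cw}_{\mathrm m}(G^+)\le 4^{\mathrm{cw}_{\mathrm m}(G)}\cdot\mathrm{cw}_{\mathrm m}(G)$.
   Context: A mixed graph $G$ consists of a finite vertex set $V(G)$, a set $E(G)$ of undirected edges and a set $A(G)$ of directed arcs; it is simple and contains no directed cycle. The transitive closure $G^+$ is obtained by adding every arc $(u,v)$ such that $G$ has a directed path from $u$ to $v$, and removing any edge parallel to such an arc. $N^+(v)$, $N^-(v)$, $N^{\mathrm u}(v)$ denote out-, in- and undirected neighbors; $u,v$ have the same mixed type if $N^{\mathrm u}(u)\setminus\{v\}=N^{\mathrm u}(v)\setminus\{u\}$, $N^-(u)=N^-(v)$, $N^+(u)=N^+(v)$; $\mathrm{nd}_{\mathrm m}$ is the number of mixed types. The mixed cliquewidth $\mathrm{cw}_{\mathrm m}$ is the minimum number of labels needed to construct the graph using: create a new vertex with label $i$; disjoint union; $\eta_{i,j}$ ($i\ne j$): add an edge between every vertex labeled $i$ and every vertex labeled $j$; $\alpha_{i,j}$ ($i\ne j$): add an arc from every vertex labeled $i$ to every vertex labeled $j$; $\rho_{i\to j}$: rename label $i$ to $j$. *)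

(* Defs.v *)
From mathcomp Require Import all_boot.
Set Implicit Arguments. Unset Strict Implicit. Unset Printing Implicit Defensive.

Record mgraph (T : finType) := MGraph { medge : rel T; marc : rel T }.

Definition is_mixed_dag (T : finType) (G : mgraph T) : Prop :=
  [/\ (forall x y, medge G x y = medge G y x),
      (forall x, ~~ medge G x x),
      (forall x y, medge G x y -> ~~ marc G x y /\ ~~ marc G y x)
    & (forall x y, marc G x y -> ~~ connect (marc G) y x)].

Definition plus_arc (T : finType) (G : mgraph T) : rel T :=
  fun u v => [exists z, marc G u z && connect (marc G) z v].

Definition tclosure (T : finType) (G : mgraph T) : mgraph T :=
  MGraph (fun u v => [&& medge G u v, ~~ plus_arc G u v & ~~ plus_arc G v u])
         (plus_arc G).

Definition same_mtype (T : finType) (G : mgraph T) (u v : T) : bool :=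
  [&& [forall w, ((w != v) && medge G u w) == ((w != u) && medge G v w)],
      [forall w, marc G w u == marc G w v]
    & [forall w, marc G u w == marc G v w]].

Definition nd_m (T : finType) (G : mgraph T) : nat :=
  #|[set [set v | same_mtype G u v] | u : T]|.

(** * Mixed clique-width expressions; leaves name the actual vertices *)
Inductive cwexp (T : Type) :=
| CCreate of T & nat
| CUnion of cwexp T & cwexp T
| CEta of nat & nat & cwexp T
| CAlpha of nat & nat & cwexp T
| CRename of nat & nat & cwexp T.

Section Sem.
Variable T : eqType.

Fixpoint cw_verts (e : cwexp T) : seq T :=
  match e with
  | CCreate v _ => [:: v]
  | CUnion e1 e2 => cw_verts e1 ++ cw_verts e2
  | CEta _ _ e | CAlpha _ _ e | CRename _ _ e => cw_verts e
  end.

Fixpoint cw_lab (e : cwexp T) : T -> nat :=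
  match e with
  | CCreate _ i => fun _ => i
  | CUnion e1 e2 => fun x => if x \in cw_verts e1 then cw_lab e1 x else cw_lab e2 x
  | CEta _ _ e | CAlpha _ _ e => cw_lab e
  | CRename i j e => fun x => if cw_lab e x == i then j else cw_lab e x
  end.

Fixpoint cw_edge (e : cwexp T) : rel T :=
  match e with
  | CCreate _ _ => fun _ _ => false
  | CUnion e1 e2 => fun x y => cw_edge e1 x y || cw_edge e2 x y
  | CEta i j e => fun x y =>
      [|| cw_edge e x y,
          [&& x \in cw_verts e, y \in cw_verts e, cw_lab e x == i & cw_lab e y == j]
        | [&& x \in cw_verts e, y \in cw_verts e, cw_lab e x == j & cw_lab e y == i]]
  | CAlpha _ _ e | CRename _ _ e => cw_edge e
  end.

Fixpoint cw_arc (e : cwexp T) : rel T :=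
  match e with
  | CCreate _ _ => fun _ _ => false
  | CUnion e1 e2 => fun x y => cw_arc e1 x y || cw_arc e2 x y
  | CAlpha i j e => fun x y =>
      cw_arc e x y ||
      [&& x \in cw_verts e, y \in cw_verts e, cw_lab e x == i & cw_lab e y == j]
  | CEta _ _ e | CRename _ _ e => cw_arc e
  end.

Fixpoint cw_uses (k : nat) (e : cwexp T) : bool :=
  match e with
  | CCreate _ i => i < k
  | CUnion e1 e2 => cw_uses k e1 && cw_uses k e2
  | CEta i j e | CAlpha i j e => [&& i < k, j < k, i != j & cw_uses k e]
  | CRename i j e => [&& i < k, j < k & cw_uses k e]
  end.
End Sem.

(** e constructs G: every vertex created exactly once (so unions are disjoint),
    and the resulting edges/arcs are exactly those of G *)
Definition cw_constructs (T : finType) (G : mgraph T) (e : cwexp T) : Prop :=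
  [/\ uniq (cw_verts e), (forall v, v \in cw_verts e),
      (forall x y, cw_edge e x y = medge G x y)
    & (forall x y, cw_arc e x y = marc G x y)].

Definition cw_le (T : finType) (G : mgraph T) (k : nat) : Prop :=
  exists e : cwexp T, cw_uses k e /\ cw_constructs G e.

Definition is_cwm (T : finType) (G : mgraph T) (k : nat) : Prop :=
  cw_le G k /\ forall k', cw_le G k' -> k <= k'.

(* Main.v *)
Require Import Defs.
From mathcomp Require Import all_boot.
From Stdlib Require Import Classical.
From mathcomp Require Import zify.
Set Implicit Arguments. Unset Strict Implicit. Unset Printing Implicit Defensive.

Section Generic.
Variable T : eqType.
Implicit Types (e t f : cwexp T).

Fixpoint sub (t e : cwexp T) : Prop :=
  t = e \/ match e with
           | CCreate _ _ => False
           | CUnion e1 e2 => sub t e1 \/ sub t e2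
           | CEta _ _ e0 | CAlpha _ _ e0 | CRename _ _ e0 => sub t e0
           end.

Lemma sub_refl t : sub t t. Proof. by case: t => *; left. Qed.

Lemma sub_trans a b c : sub a b -> sub b c -> sub a c.
Proof.
move=> Hab; elim: c => [v i|c1 IH1 c2 IH2|i j c IH|i j c IH|i j c IH] [E|H];
  try (by rewrite -E); right => //.
- by case: H => H; [left; apply: IH1|right; apply: IH2].
- exact: IH.
- exact: IH.
- exact: IH.
Qed.

Lemma arc_verts e x y : cw_arc e x y -> (x \in cw_verts e) && (y \in cw_verts e).
Proof.
elim: e => [v i|e1 IH1 e2 IH2|i j e IH|i j e IH|i j e IH] //=.
- rewrite !mem_cat; case/orP => [/IH1|/IH2] /andP[-> ->]; rewrite ?orbT //.
- case/orP => [/IH //|]; by case/and4P => -> ->.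
Qed.

Lemma edge_verts e x y : cw_edge e x y -> (x \in cw_verts e) && (y \in cw_verts e).
Proof.
elim: e => [v i|e1 IH1 e2 IH2|i j e IH|i j e IH|i j e IH] //=.
- rewrite !mem_cat; case/orP => [/IH1|/IH2] /andP[-> ->]; rewrite ?orbT //.
- case/or3P => [/IH //| |]; by case/and4P => -> ->.
Qed.

Lemma sub_verts t e : sub t e -> {subset cw_verts t <= cw_verts e}.
Proof.
elim: e => [v i|e1 IH1 e2 IH2|i j e IH|i j e IH|i j e IH] [E|H] x Hx; try by subst t.
by [].
rewrite /= mem_cat; case: H => H; [rewrite IH1 // | rewrite IH2 ?orbT //].
all: exact: IH.
Qed.

Lemma sub_uniq t e : sub t e -> uniq (cw_verts e) -> uniq (cw_verts t).
Proof.
elim: e => [v i|e1 IH1 e2 IH2|i j e IH|i j e IH|i j e IH] [E|H] U; try by subst t.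
by [].
rewrite /= cat_uniq in U; case/and3P: U => U1 _ U2.
by case: H => H; [apply: IH1|apply: IH2].
all: exact: IH.
Qed.

Lemma sub_uses k t e : sub t e -> cw_uses k e -> cw_uses k t.
Proof.
elim: e => [v i|e1 IH1 e2 IH2|i j e IH|i j e IH|i j e IH] [E|H] U; try by subst t.
by [].
case/andP: U => U1 U2; by case: H => H; [apply: IH1|apply: IH2].
- by case/and4P: U => _ _ _ U; exact: IH.
- by case/and4P: U => _ _ _ U; exact: IH.
- by case/and3P: U => _ _ U; exact: IH.
Qed.

Lemma uses_lab k e x : cw_uses k e -> x \in cw_verts e -> cw_lab e x < k.
Proof.
elim: e => [v i|e1 IH1 e2 IH2|i j e IH|i j e IH|i j e IH] //=.
- case/andP => U1 U2; rewrite mem_cat; case: ifP => [H _|H /orP[|]]; rewrite ?H //.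
  + exact: IH1.
  + exact: IH2.
- by case/and4P => _ _ _ /IH.
- by case/and4P => _ _ _ /IH.
- by case/and3P => _ Hj /IH H Hx; case: eqP => // _; apply: H.
Qed.

Lemma uses_pos k e : cw_uses k e -> 0 < k.
Proof.
elim: e => [v i|e1 IH1 e2 IH2|i j e IH|i j e IH|i j e IH] /=.
- exact: leq_ltn_trans.
- by case/andP => /IH1.
- by case/and4P => _ _ _ /IH.
- by case/and4P => _ _ _ /IH.
- by case/and3P => _ _ /IH.
Qed.

Lemma out_false f a u : u \notin cw_verts f ->
  cw_arc f a u = false /\ cw_arc f u a = false /\ cw_edge f a u = false /\ cw_edge f u a = false /\
  cw_arc f a u = false /\ cw_arc f u a = false /\ cw_edge f a u = false /\ cw_edge f u a = false.
Proof.
move=> Hu; have A : cw_arc f a u = false by apply/negP => /arc_verts/andP[_ H]; rewrite H in Hu.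
have B : cw_arc f u a = false by apply/negP => /arc_verts/andP[H _]; rewrite H in Hu.
have C : cw_edge f a u = false by apply/negP => /edge_verts/andP[_ H]; rewrite H in Hu.
have D : cw_edge f u a = false by apply/negP => /edge_verts/andP[H _]; rewrite H in Hu.
by [].
Qed.

Lemma ctx e t : sub t e -> uniq (cw_verts e) -> forall z z',
  z \in cw_verts t -> z' \in cw_verts t -> cw_lab t z = cw_lab t z' ->
  cw_lab e z = cw_lab e z' /\ forall u, u \notin cw_verts t ->
  [/\ cw_arc e z u = cw_arc e z' u, cw_arc e u z = cw_arc e u z',
      cw_edge e z u = cw_edge e z' u & cw_edge e u z = cw_edge e u z'].
Proof.
move=> Hs U z z' Hz Hz' Hl.
have base : forall f, cw_lab f z = cw_lab f z' -> (cw_lab f z = cw_lab f z' /\ forall u, u \notin cw_verts f ->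
  [/\ cw_arc f z u = cw_arc f z' u, cw_arc f u z = cw_arc f u z',
      cw_edge f z u = cw_edge f z' u & cw_edge f u z = cw_edge f u z']).
  move=> f Hf; split=> // u Hu.
  have := out_false z Hu; have := out_false z' Hu.
  by move=> [-> [-> [-> [-> _]]]] [-> [-> [-> [-> _]]]].
elim: e Hs U => [v i|e1 IH1 e2 IH2|i j e IH|i j e IH|i j e IH] [E|H] U; try (subst t; exact: base).
- by [].
- rewrite /= cat_uniq in U; case/and3P: U => U1 Dj U2.
  have n2 : forall w, w \in cw_verts e1 -> w \notin cw_verts e2.
    move=> w Hw; apply/negP => Hw2; case/negP: Dj; apply/hasP; by exists w.
  have n1 : forall w, w \in cw_verts e2 -> w \notin cw_verts e1.
    move=> w Hw; apply/negP => Hw1; case/negP: Dj; apply/hasP; by exists w.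
  case: H => H.
  + have Hz1 := sub_verts H Hz; have Hz1' := sub_verts H Hz'.
    case: (IH1 H U1) => L R; rewrite /= Hz1 Hz1'; split=> // u Hu.
    have := out_false u (n2 _ Hz1); have := out_false u (n2 _ Hz1').
    move=> [-> [-> [-> [-> _]]]] [-> [-> [-> [-> _]]]]; rewrite !orbF; exact: R.
  + have Hz2 := sub_verts H Hz; have Hz2' := sub_verts H Hz'.
    case: (IH2 H U2) => L R; rewrite /= (negbTE (n1 _ Hz2)) (negbTE (n1 _ Hz2')); split=> // u Hu.
    have := out_false u (n1 _ Hz2); have := out_false u (n1 _ Hz2').
    move=> [-> [-> [-> [-> _]]]] [-> [-> [-> [-> _]]]]; exact: R.
- case: (IH H U) => L R; split=> // u Hu /=; case: (R u Hu) => -> -> -> ->.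
  have Hz0 := sub_verts H Hz; have Hz0' := sub_verts H Hz'.
  by rewrite Hz0 Hz0' L.
- case: (IH H U) => L R; split=> // u Hu /=; case: (R u Hu) => -> -> -> ->.
  have Hz0 := sub_verts H Hz; have Hz0' := sub_verts H Hz'.
  by rewrite Hz0 Hz0' L.
- case: (IH H U) => L R; split; first by rewrite /= L.
  move=> u Hu /=; by case: (R u Hu) => -> -> -> ->.
Qed.

Definition rn (s : seq (nat * nat)) f := foldr (fun p f => CRename p.1 p.2 f) f s.
Definition etas (s : seq (nat * nat)) f := foldr (fun p f => CEta p.1 p.2 f) f s.
Definition alphas (s : seq (nat * nat)) f := foldr (fun p f => CAlpha p.1 p.2 f) f s.

Lemma rn_verts s f : cw_verts (rn s f) = cw_verts f. Proof. by elim: s. Qed.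
Lemma rn_edge s f : cw_edge (rn s f) = cw_edge f. Proof. by elim: s. Qed.
Lemma rn_arc s f : cw_arc (rn s f) = cw_arc f. Proof. by elim: s. Qed.
Lemma etas_verts s f : cw_verts (etas s f) = cw_verts f. Proof. by elim: s. Qed.
Lemma etas_lab s f : cw_lab (etas s f) = cw_lab f. Proof. by elim: s. Qed.
Lemma etas_arc s f : cw_arc (etas s f) = cw_arc f. Proof. by elim: s. Qed.
Lemma alphas_verts s f : cw_verts (alphas s f) = cw_verts f. Proof. by elim: s. Qed.
Lemma alphas_lab s f : cw_lab (alphas s f) = cw_lab f. Proof. by elim: s. Qed.
Lemma alphas_edge s f : cw_edge (alphas s f) = cw_edge f. Proof. by elim: s. Qed.

Lemma etas_edge s f x y : cw_edge (etas s f) x y = cw_edge f x y ||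
  has (fun p => [&& x \in cw_verts f, y \in cw_verts f, cw_lab f x == p.1 & cw_lab f y == p.2]
             || [&& x \in cw_verts f, y \in cw_verts f, cw_lab f x == p.2 & cw_lab f y == p.1]) s.
Proof.
elim: s => [|p s IH] /=; first by rewrite orbF.
rewrite etas_verts etas_lab IH; by case: (cw_edge f x y); case: (has _ s); case: (_ && _); case: (_ && _); rewrite ?orbT.
Qed.

Lemma alphas_arc s f x y : cw_arc (alphas s f) x y = cw_arc f x y ||
  has (fun p => [&& x \in cw_verts f, y \in cw_verts f, cw_lab f x == p.1 & cw_lab f y == p.2]) s.
Proof.
elim: s => [|p s IH] /=; first by rewrite orbF.
rewrite alphas_verts alphas_lab IH; by case: (cw_arc f x y); case: (has _ s); case: (_ && _); rewrite ?orbT.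
Qed.

Lemma rn_lab s f x :
  (forall p q, p \in s -> q \in s -> p.1 != q.2) ->
  (forall p q, p \in s -> q \in s -> p.1 = q.1 -> p.2 = q.2) ->
  (forall p, p \in s -> cw_lab f x = p.1 -> cw_lab (rn s f) x = p.2) /\
  ((forall p, p \in s -> cw_lab f x != p.1) -> cw_lab (rn s f) x = cw_lab f x).
Proof.
elim: s => [|p s IH] H1 H2 //=.
have H1' : forall p q, p \in s -> q \in s -> p.1 != q.2.
  by move=> a b Ha Hb; apply: H1; rewrite inE ?Ha ?Hb orbT.
have H2' : forall p q, p \in s -> q \in s -> p.1 = q.1 -> p.2 = q.2.
  by move=> a b Ha Hb; apply: H2; rewrite inE ?Ha ?Hb orbT.
case: (IH H1' H2') => IHa IHb; split.
- move=> q; rewrite inE => /orP[/eqP ->|Hq] Hl.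
  + have [[q' Hq' Hl']|Hn] : (exists2 q', q' \in s & cw_lab f x = q'.1) \/ (forall q', q' \in s -> cw_lab f x != q'.1).
      case: (boolP (has (fun q' => cw_lab f x == q'.1) s)) => [/hasP[q' ? /eqP]|/hasPn]; by [left; exists q' | right].
    * have Hq'' : q' \in p :: s by rewrite inE Hq' orbT.
      rewrite /= (IHa _ Hq' Hl'); have := H1 p q' (mem_head _ _) Hq''.
      rewrite eq_sym => /negbTE ->; apply: H2 => //; [exact: mem_head | by rewrite -Hl' -Hl].
    * by rewrite /= (IHb Hn) Hl eqxx.
  + have Hq'' : q \in p :: s by rewrite inE Hq orbT.
    rewrite /= (IHa _ Hq Hl); have := H1 p q (mem_head _ _) Hq''.
    by rewrite eq_sym => /negbTE ->.
- move=> Hn; rewrite /= IHb; last by move=> q Hq; apply: Hn; rewrite inE Hq orbT.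
  by have := Hn p (mem_head _ _); move/negbTE ->.
Qed.

Lemma rn_uses k s f : all (fun p => (p.1 < k) && (p.2 < k)) s -> cw_uses k f -> cw_uses k (rn s f).
Proof. elim: s => //= p s IH /andP[/andP[-> ->] /IH H] /H ->. by []. Qed.
Lemma etas_uses k s f : all (fun p => [&& p.1 < k, p.2 < k & p.1 != p.2]) s -> cw_uses k f -> cw_uses k (etas s f).
Proof. elim: s => //= p s IH /andP[/and3P[-> -> ->] /IH H] /H ->. by []. Qed.
Lemma alphas_uses k s f : all (fun p => [&& p.1 < k, p.2 < k & p.1 != p.2]) s -> cw_uses k f -> cw_uses k (alphas s f).
Proof. elim: s => //= p s IH /andP[/and3P[-> -> ->] /IH H] /H ->. by []. Qed.

Lemma crossing (U : finType) (r : rel U) (P : pred U) x y :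
  connect r x y -> P x -> ~~ P y ->
  exists z u, [/\ P z, ~~ P u, connect r x z, r z u & connect r u y].
Proof.
case/connectP => p; elim: p x => [|a p IH] x /= Hp Ey Px Py.
  by rewrite Ey Px in Py.
case/andP: Hp => Hxa Hp.
case: (boolP (P a)) => Pa.
- have [z [u [Pz Pu Caz Hzu Cuy]]] := IH a Hp Ey Pa Py.
  exists z, u; split=> //; apply: connect_trans Caz; exact: connect1.
- exists x, a; split=> //; apply/connectP; by exists p.
Qed.

End Generic.
Section Closure.
Variable T : finType.
Variable G : mgraph T.
Hypothesis HG : is_mixed_dag G.

Local Notation R := (connect (marc G)).

Lemma conn_last (x y : T) : R x y -> x = y \/ exists z, R x z && marc G z y.
Proof.
case/connectP => p; case/lastP: p => [|p z] Hp Ey; first by left.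
right; rewrite rcons_path in Hp; case/andP: Hp => Hp Hl.
rewrite last_rcons in Ey; subst y; exists (last x p); rewrite Hl andbT.
by apply/connectP; exists p.
Qed.

Lemma plusE x y : plus_arc G x y = R x y && (x != y).
Proof.
case: HG => _ _ _ Hac.
apply/idP/andP.
- case/existsP => z /andP[Hxz Hzy]; split; first exact: connect_trans (connect1 Hxz) Hzy.
  apply/eqP => Exy; subst y; by have := Hac _ _ Hxz; rewrite Hzy.
- case=> /connectP [[|a p] /= Hp Ey] Hne; first by rewrite Ey eqxx in Hne.
  case/andP: Hp => Hxa Hp; apply/existsP; exists a; rewrite Hxa /=.
  by apply/connectP; exists p.
Qed.

Lemma plus_in w u : plus_arc G w u = [exists y, R w y && marc G y u].
Proof.
case: HG => _ _ _ Hac.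
rewrite plusE; apply/andP/existsP.
- case=> /conn_last [->|[z Hz]] Hne; [by rewrite eqxx in Hne | by exists z].
- case=> y /andP[Hwy Hyu]; split; first exact: connect_trans Hwy (connect1 Hyu).
  apply/eqP => E; subst w; by have := Hac _ _ Hyu; rewrite Hwy.
Qed.

Lemma mtype_plus u v : same_mtype G u v -> same_mtype (tclosure G) u v.
Proof.
case/and3P => /forallP He /forallP Hi /forallP Ho.
have Pout : forall w, plus_arc G u w = plus_arc G v w.
  move=> w; apply: eq_existsb => z; by rewrite (eqP (Ho z)).
have Pin : forall w, plus_arc G w u = plus_arc G w v.
  move=> w; rewrite !plus_in; apply: eq_existsb => z; by rewrite (eqP (Hi z)).
apply/and3P; split; apply/forallP => w /=.
- rewrite Pout Pin !andbA; by rewrite (eqP (He w)).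
- by rewrite Pin.
- by rewrite Pout.
Qed.

End Closure.

Section Equiv.
Variable T : finType.
Variable H : mgraph T.
Hypothesis Hsym : forall x y, medge H x y = medge H y x.
Hypothesis Hirr : forall x, ~~ medge H x x.

Lemma smt_refl u : same_mtype H u u.
Proof. by apply/and3P; split; apply/forallP => w. Qed.

Lemma smt_sym u v : same_mtype H u v -> same_mtype H v u.
Proof.
case/and3P => /forallP A /forallP B /forallP C; apply/and3P; split; apply/forallP => w;
  by rewrite eq_sym.
Qed.

Lemma smt_trans u v w : same_mtype H u v -> same_mtype H v w -> same_mtype H u w.
Proof.
case/and3P => /forallP A1 /forallP B1 /forallP C1.
case/and3P => /forallP A2 /forallP B2 /forallP C2.
apply/and3P; split; apply/forallP => x.
- have [Euv|Nuv] := eqVneq u v; first by subst v.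
  have [Evw|Nvw] := eqVneq v w; first by subst w.
  have [Euw|Nuw] := eqVneq u w; first by subst w.
  have [Exu|Nxu] := eqVneq x u.
    subst x; by rewrite (negbTE (Hirr u)) andbF eqxx.
  have [Exw|Nxw] := eqVneq x w.
    subst x; by rewrite (negbTE (Hirr w)) andbF eqxx.
  have [Exv|Nxv] := eqVneq x v.
  + rewrite Exv /=.
    have h1 : medge H u w = medge H v w.
      by have := eqP (A1 w); rewrite (eq_sym w v) Nvw (eq_sym w u) Nuw.
    have h2 : medge H v u = medge H w u.
      by have := eqP (A2 u); rewrite Nuw Nuv.
    by rewrite Hsym h2 Hsym h1 Hsym.
  + have h1 := eqP (A1 x); have h2 := eqP (A2 x).
    rewrite Nxv Nxu /= in h1; rewrite Nxw Nxv /= in h2.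
    by rewrite /= h1 h2.
- by rewrite (eqP (B1 x)) (eqP (B2 x)).
- by rewrite (eqP (C1 x)) (eqP (C2 x)).
Qed.
End Equiv.

Lemma card_factor (T : finType) (f g : T -> {set T}) :
  (forall u u', g u = g u' -> f u = f u') ->
  #|[set f u | u in T]| <= #|[set g u | u in T]|.
Proof.
move=> Hfg.
pose h (S : {set T}) := if [pick u | g u == S] is Some u then f u else set0.
have -> : [set f u | u in T] = [set h S | S in [set g u | u in T]].
  apply/setP => X; apply/imsetP/imsetP.
  - case=> u _ ->; exists (g u); first by apply/imsetP; exists u.
    rewrite /h; case: pickP => [u' /eqP /Hfg -> //|/(_ u)]; by rewrite eqxx.
  - case=> S /imsetP [u _ ->] ->; exists u => //.
    rewrite /h; case: pickP => [u' /eqP /Hfg -> //|/(_ u)]; by rewrite eqxx.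
exact: leq_imset_card.
Qed.

Lemma nd_part (T : finType) (G : mgraph T) : is_mixed_dag G -> nd_m (tclosure G) <= nd_m G.
Proof.
move=> HG; case: (HG) => Hsym Hirr _ _.
have Hsym' : forall x y, medge (tclosure G) x y = medge (tclosure G) y x.
  move=> x y; rewrite /tclosure /= Hsym.
  by case: (plus_arc G x y); case: (plus_arc G y x); rewrite ?andbF.
have Hirr' : forall x, ~~ medge (tclosure G) x x.
  by move=> x; rewrite /tclosure /= (negbTE (Hirr x)).
apply: card_factor => u u' E.
have Huu' : same_mtype G u u'.
  have : u' \in [set v | same_mtype G u' v] by rewrite inE smt_refl.
  by rewrite -E inE.
have P := mtype_plus HG Huu'.
apply/setP => v; rewrite !inE; apply/idP/idP => Hv.
- apply: smt_trans Hv => //; exact: smt_sym.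
- exact: smt_trans P Hv.
Qed.
Section Constr.
Variable T : finType.
Variable G : mgraph T.
Hypothesis HG : is_mixed_dag G.
Variable e : cwexp T.
Variable k' : nat.
Local Notation k := k'.+1.
Hypothesis He : cw_constructs G e.
Hypothesis Hu : cw_uses k e.

Local Notation R := (connect (marc G)).

Definition Out (t : cwexp T) (x : T) : {set 'I_k} :=
  [set (inord (cw_lab t z) : 'I_k) | z in [set z | (z \in cw_verts t) && R x z]].
Definition In (t : cwexp T) (y : T) : {set 'I_k} :=
  [set (inord (cw_lab t z) : 'I_k) | z in [set z | (z \in cw_verts t) && R z y]].

Local Notation CT := {c : 'I_k * {set 'I_k} * {set 'I_k} | (c.1.1 \in c.1.2) && (c.1.1 \in c.2)}.

Definition c0 : CT.
Proof. exists (ord0, [set ord0], [set ord0]); by rewrite /= !inE eqxx. Defined.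

Definition code (t : cwexp T) (x : T) : CT :=
  insubd c0 (inord (cw_lab t x), Out t x, In t x).

Local Notation LT := ('I_4 * CT)%type.
Definition lbl (p : LT) : nat := enum_rank p.
Definition K := #|{: LT}|.

Definition r0 : 'I_4 := @Ordinal 4 0 isT.
Definition r1 : 'I_4 := @Ordinal 4 1 isT.
Definition r2 : 'I_4 := @Ordinal 4 2 isT.

Definition gf (t0 t : cwexp T) (c : CT) : CT :=
  if [pick x | (x \in cw_verts t0) && (code t0 x == c)] is Some x then code t x else c.

Definition mv (r r' : 'I_4) (h : CT -> CT) : seq (nat * nat) :=
  [seq (lbl (r, c), lbl (r', h c)) | c <- enum {: CT}].

Definition Dm (s1 s2 : cwexp T) (rl : rel T) (c1 c2 : CT) : bool :=
  [exists x, exists y, [&& x \in cw_verts s1, y \in cw_verts s2, code s1 x == c1,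
                           code s2 y == c2 & rl x y]].

Definition pl (D : CT -> CT -> bool) (r r' : 'I_4) : seq (nat * nat) :=
  [seq (lbl (r, c.1), lbl (r', c.2)) | c <- enum {: CT * CT} & D c.1 c.2].

Fixpoint tr (t : cwexp T) : cwexp T :=
  match t with
  | CCreate v i => CCreate v (lbl (r0, code (CCreate v i) v))
  | CUnion t1 t2 =>
      rn (mv r2 r0 id) (rn (mv r1 r2 (gf t2 (CUnion t1 t2))) (rn (mv r0 r2 (gf t1 (CUnion t1 t2)))
        (alphas (pl (Dm t2 t1 (plus_arc G)) r1 r0) (alphas (pl (Dm t1 t2 (plus_arc G)) r0 r1)
          (etas (pl (Dm t1 t2 (medge (tclosure G))) r0 r1)
            (CUnion (tr t1) (rn (mv r0 r1 id) (tr t2))))))))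
  | CEta _ _ t0 | CAlpha _ _ t0 => tr t0
  | CRename i j t0 => rn (mv r2 r0 id) (rn (mv r0 r2 (gf t0 (CRename i j t0))) (tr t0))
  end.

Lemma lbl_inj : injective lbl.
Proof. move=> p q /ord_inj; exact: enum_rank_inj. Qed.

Lemma lblE p q : (lbl p == lbl q) = (p == q).
Proof. apply/eqP/eqP => [/lbl_inj|->] //. Qed.

Lemma lbl_lt p : lbl p < K.
Proof. exact: ltn_ord. Qed.

Lemma mv_lab r r' h (f : cwexp T) (x : T) : r != r' ->
  (forall c, cw_lab f x = lbl (r, c) -> cw_lab (rn (mv r r' h) f) x = lbl (r', h c)) /\
  ((forall c, cw_lab f x != lbl (r, c)) -> cw_lab (rn (mv r r' h) f) x = cw_lab f x).
Proof.
move=> Hr.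
have H1 : forall p q, p \in mv r r' h -> q \in mv r r' h -> p.1 != q.2.
  move=> p q /mapP[c _ ->] /mapP[d _ ->] /=; rewrite lblE xpair_eqE negb_and; by rewrite Hr.
have H2 : forall p q, p \in mv r r' h -> q \in mv r r' h -> p.1 = q.1 -> p.2 = q.2.
  move=> p q /mapP[c _ ->] /mapP[d _ ->] /= /lbl_inj [->] //.
have [A B] := @rn_lab _ (mv r r' h) f x H1 H2.
split.
- move=> c Hc; apply: (A (lbl (r, c), lbl (r', h c))) => //; apply/mapP; exists c => //; exact: mem_enum.
- move=> Hn; apply: B => p /mapP[c _ ->]; exact: Hn.
Qed.

Lemma mv_uses r r' h (f : cwexp T) : r != r' -> cw_uses K f -> cw_uses K (rn (mv r r' h) f).
Proof.
move=> Hr; apply: rn_uses; apply/allP => p /mapP[c _ ->] /=; by rewrite !lbl_lt.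
Qed.

Lemma pl_uses D r r' : r != r' -> all (fun p => [&& p.1 < K, p.2 < K & p.1 != p.2]) (pl D r r').
Proof.
move=> Hr; apply/allP => p /mapP[c _ ->] /=; by rewrite !lbl_lt lblE xpair_eqE negb_and Hr.
Qed.

Lemma has_lbl D r r' ra rb a b :
  has (fun p => (lbl (ra, a) == p.1) && (lbl (rb, b) == p.2)) (pl D r r') = [&& ra == r, rb == r' & D a b].
Proof.
apply/hasP/and3P.
- case=> p /mapP[c]; rewrite mem_filter => /andP[Dc _] -> /=.
  rewrite !lblE !xpair_eqE => /andP[/andP[/eqP -> /eqP Ea] /andP[/eqP -> /eqP Eb]].
  by subst; case: c Dc.
- case=> /eqP -> /eqP -> Dab; exists (lbl (r, a), lbl (r', b)); last by rewrite /= !eqxx.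
  apply/mapP; exists (a, b) => //; by rewrite mem_filter Dab mem_enum.
Qed.

Lemma tr_verts t : cw_verts (tr t) = cw_verts t.
Proof.
elim: t => [v i|t1 IH1 t2 IH2|i j t IH|i j t IH|i j t IH] //=.
- by rewrite !rn_verts !alphas_verts etas_verts /= IH1 rn_verts IH2.
- by rewrite !rn_verts IH.
Qed.

Lemma tr_uses t : cw_uses K (tr t).
Proof.
elim: t => [v i|t1 IH1 t2 IH2|i j t IH|i j t IH|i j t IH] //=.
- exact: lbl_lt.
- apply: mv_uses => //; apply: mv_uses => //; apply: mv_uses => //.
  apply: alphas_uses; first exact: pl_uses.
  apply: alphas_uses; first exact: pl_uses.
  apply: etas_uses; first exact: pl_uses.
  by rewrite /= IH1 mv_uses.
- by apply: mv_uses => //; apply: mv_uses.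
Qed.

Lemma Uq : uniq (cw_verts e). Proof. by case: He. Qed.
Lemma arcE x y : marc G x y = cw_arc e x y. Proof. by case: He => _ _ _ ->. Qed.
Lemma edgeE x y : medge G x y = cw_edge e x y. Proof. by case: He => _ _ ->. Qed.

Lemma lab_lt t z : sub t e -> z \in cw_verts t -> cw_lab t z < k.
Proof. move=> Hs; apply: uses_lab; exact: sub_uses Hs Hu. Qed.

Lemma inord_inj_lt a b : a < k -> b < k -> (inord a : 'I_k) = inord b -> a = b.
Proof. move=> Ha Hb E; by rewrite -[a](inordK Ha) -[b](inordK Hb) E. Qed.

Lemma ctxG t z z' u : sub t e -> z \in cw_verts t -> z' \in cw_verts t ->
  cw_lab t z = cw_lab t z' -> u \notin cw_verts t ->
  [/\ marc G z u = marc G z' u, marc G u z = marc G u z',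
      medge G z u = medge G z' u & medge G u z = medge G u z'].
Proof.
move=> Hs Hz Hz' Hl Hn; have [_ /(_ u Hn) [A B C D]] := ctx Hs Uq Hz Hz' Hl.
by rewrite !arcE !edgeE.
Qed.

Lemma OutP t x b : reflect (exists2 z, (z \in cw_verts t) && R x z & b = inord (cw_lab t z)) (b \in Out t x).
Proof.
apply: (iffP imsetP) => [[z]|[z]]; rewrite ?inE => H ->; by exists z; rewrite ?inE.
Qed.

Lemma InP t y b : reflect (exists2 z, (z \in cw_verts t) && R z y & b = inord (cw_lab t z)) (b \in In t y).
Proof.
apply: (iffP imsetP) => [[z]|[z]]; rewrite ?inE => H ->; by exists z; rewrite ?inE.
Qed.

Lemma W1 t x x' y : sub t e -> x \in cw_verts t -> x' \in cw_verts t -> Out t x = Out t x' ->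
  y \notin cw_verts t -> R x y -> R x' y.
Proof.
move=> Hs Hx Hx' EO Hy Rxy.
have [z [u [Pz Pu Rxz Azu Ruy]]] := crossing (P := fun w => w \in cw_verts t) Rxy Hx Hy.
have : inord (cw_lab t z) \in Out t x' by rewrite -EO; apply/OutP; exists z; rewrite ?Pz.
case/OutP => z' /andP[Hz' Rx'z'] /inord_inj_lt E.
have E' := E (lab_lt Hs Pz) (lab_lt Hs Hz').
have [A _ _ _] := ctxG Hs Pz Hz' E' Pu.
apply: connect_trans Rx'z' _; apply: connect_trans Ruy; apply: connect1; by rewrite -A.
Qed.

Lemma W2 t x y y' : sub t e -> y \in cw_verts t -> y' \in cw_verts t -> In t y = In t y' ->
  x \notin cw_verts t -> R x y -> R x y'.
Proof.
move=> Hs Hy Hy' EI Hx Rxy.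
have Hy2 : ~~ (y \notin cw_verts t) by rewrite negbK.
have [z [u [Pz Pu Rxz Azu Ruy]]] := crossing (P := fun w => w \notin cw_verts t) Rxy Hx Hy2.
rewrite negbK in Pu.
have : inord (cw_lab t u) \in In t y' by rewrite -EI; apply/InP; exists u; rewrite ?Pu.
case/InP => u' /andP[Hu' Ru'y'] /inord_inj_lt E.
have E' := E (lab_lt Hs Pu) (lab_lt Hs Hu').
have [_ B _ _] := ctxG Hs Pu Hu' E' Pz.
apply: connect_trans Rxz _; apply: connect_trans Ru'y'; apply: connect1; by rewrite -B.
Qed.

Lemma codeE t x : x \in cw_verts t -> val (code t x) = (inord (cw_lab t x), Out t x, In t x).
Proof.
move=> Hx; rewrite /code insubdK //= ; apply/andP; split.
- by apply/OutP; exists x; rewrite ?Hx ?connect0.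
- by apply/InP; exists x; rewrite ?Hx ?connect0.
Qed.

Lemma code_eq t x x' : sub t e -> x \in cw_verts t -> x' \in cw_verts t -> code t x = code t x' ->
  [/\ cw_lab t x = cw_lab t x', Out t x = Out t x' & In t x = In t x'].
Proof.
move=> Hs Hx Hx' /(congr1 val); rewrite !codeE // => -[E1 E2 E3]; split=> //.
exact: inord_inj_lt (lab_lt Hs Hx) (lab_lt Hs Hx') E1.
Qed.

Lemma code_conv t x x' : x \in cw_verts t -> x' \in cw_verts t ->
  cw_lab t x = cw_lab t x' -> Out t x = Out t x' -> In t x = In t x' -> code t x = code t x'.
Proof. move=> Hx Hx' E1 E2 E3; apply: val_inj; by rewrite !codeE // E1 E2 E3. Qed.

Lemma code_child t s x x' : sub t e -> sub s e -> {subset cw_verts s <= cw_verts t} ->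
  (forall z, z \in cw_verts s -> cw_lab t z = cw_lab s z) ->
  x \in cw_verts s -> x' \in cw_verts s -> code s x = code s x' -> code t x = code t x'.
Proof.
move=> Ht Hs Sub Hl Hx Hx' /(code_eq Hs Hx Hx') [E1 E2 E3].
have OS : forall a a', a \in cw_verts s -> a' \in cw_verts s -> Out s a = Out s a' -> {subset Out t a <= Out t a'}.
  move=> a a' Ha Ha' EO b /OutP [z /andP[Hz Raz] ->].
  case: (boolP (z \in cw_verts s)) => Hzs.
  - have : inord (cw_lab s z) \in Out s a' by rewrite -EO; apply/OutP; exists z; rewrite ?Hzs.
    case/OutP => z' /andP[Hz' Ra'z'] E; apply/OutP; exists z'; first by rewrite Sub.
    by rewrite !Hl.
  - apply/OutP; exists z => //; rewrite Hz; exact: W1 Hs Ha Ha' EO Hzs Raz.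
have IS : forall a a', a \in cw_verts s -> a' \in cw_verts s -> In s a = In s a' -> {subset In t a <= In t a'}.
  move=> a a' Ha Ha' EI b /InP [z /andP[Hz Rza] ->].
  case: (boolP (z \in cw_verts s)) => Hzs.
  - have : inord (cw_lab s z) \in In s a' by rewrite -EI; apply/InP; exists z; rewrite ?Hzs.
    case/InP => z' /andP[Hz' Rz'a'] E; apply/InP; exists z'; first by rewrite Sub.
    by rewrite !Hl.
  - apply/InP; exists z => //; rewrite Hz; exact: W2 Hs Ha Ha' EI Hzs Rza.
apply: code_conv; rewrite ?Sub //.
- by rewrite !Hl.
- apply/eqP; rewrite eqEsubset; apply/andP; split; apply/subsetP;
    [exact: OS Hx Hx' E2 | exact: OS Hx' Hx (esym E2)].
- apply/eqP; rewrite eqEsubset; apply/andP; split; apply/subsetP;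
    [exact: IS Hx Hx' E3 | exact: IS Hx' Hx (esym E3)].
Qed.

Lemma code_ren i j t0 x x' : sub (CRename i j t0) e ->
  x \in cw_verts t0 -> x' \in cw_verts t0 -> code t0 x = code t0 x' ->
  code (CRename i j t0) x = code (CRename i j t0) x'.
Proof.
move=> Ht; have Hs : sub t0 e by apply: sub_trans Ht; right; exact: sub_refl.
move=> Hx Hx' /(code_eq Hs Hx Hx') [E1 E2 E3].
have OS : forall a a', a \in cw_verts t0 -> a' \in cw_verts t0 -> Out t0 a = Out t0 a' ->
    {subset Out (CRename i j t0) a <= Out (CRename i j t0) a'}.
  move=> a a' Ha Ha' EO b /OutP [z /andP[Hz Raz] ->].
  have : inord (cw_lab t0 z) \in Out t0 a' by rewrite -EO; apply/OutP; exists z; rewrite ?Hz.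
  case/OutP => z' /andP[Hz' Ra'z'] /inord_inj_lt E; apply/OutP; exists z'; first by rewrite /= Hz'.
  by rewrite /= E // ?lab_lt.
have IS : forall a a', a \in cw_verts t0 -> a' \in cw_verts t0 -> In t0 a = In t0 a' ->
    {subset In (CRename i j t0) a <= In (CRename i j t0) a'}.
  move=> a a' Ha Ha' EI b /InP [z /andP[Hz Rza] ->].
  have : inord (cw_lab t0 z) \in In t0 a' by rewrite -EI; apply/InP; exists z; rewrite ?Hz.
  case/InP => z' /andP[Hz' Rz'a'] /inord_inj_lt E; apply/InP; exists z'; first by rewrite /= Hz'.
  by rewrite /= E // ?lab_lt.
apply: code_conv => //.
- by rewrite /= E1.
- apply/eqP; rewrite eqEsubset; apply/andP; split; apply/subsetP;
    [exact: OS Hx Hx' E2 | exact: OS Hx' Hx (esym E2)].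
- apply/eqP; rewrite eqEsubset; apply/andP; split; apply/subsetP;
    [exact: IS Hx Hx' E3 | exact: IS Hx' Hx (esym E3)].
Qed.

Lemma gf_code t0 t x : x \in cw_verts t0 ->
  (forall a a', a \in cw_verts t0 -> a' \in cw_verts t0 -> code t0 a = code t0 a' -> code t a = code t a') ->
  gf t0 t (code t0 x) = code t x.
Proof.
move=> Hx Inv; rewrite /gf; case: pickP => [a /andP[Ha /eqP Ea]|/(_ x)]; last by rewrite Hx eqxx.
exact: Inv.
Qed.

Lemma R_cross s1 s2 x x' y y' : sub s1 e -> sub s2 e ->
  (forall z, z \in cw_verts s1 -> z \notin cw_verts s2) ->
  x \in cw_verts s1 -> x' \in cw_verts s1 -> y \in cw_verts s2 -> y' \in cw_verts s2 ->
  code s1 x = code s1 x' -> code s2 y = code s2 y' -> R x y -> R x' y'.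
Proof.
move=> H1 H2 Dj Hx Hx' Hy Hy' Cx Cy Rxy.
have [_ EO _] := code_eq H1 Hx Hx' Cx; have [_ _ EI] := code_eq H2 Hy Hy' Cy.
have Hy1 : y \notin cw_verts s1 by apply/negP => /Dj; rewrite Hy.
exact: W2 H2 Hy Hy' EI (Dj _ Hx') (W1 H1 Hx Hx' EO Hy1 Rxy).
Qed.

Lemma R_cross' s1 s2 x x' y y' : sub s1 e -> sub s2 e ->
  (forall z, z \in cw_verts s1 -> z \notin cw_verts s2) ->
  x \in cw_verts s1 -> x' \in cw_verts s1 -> y \in cw_verts s2 -> y' \in cw_verts s2 ->
  code s1 x = code s1 x' -> code s2 y = code s2 y' -> R y x -> R y' x'.
Proof.
move=> H1 H2 Dj Hx Hx' Hy Hy' Cx Cy Rxy.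
have [_ _ EI] := code_eq H1 Hx Hx' Cx; have [_ EO _] := code_eq H2 Hy Hy' Cy.
have Hy1 : y' \notin cw_verts s1 by apply/negP => /Dj; rewrite Hy'.
exact: W2 H1 Hx Hx' EI Hy1 (W1 H2 Hy Hy' EO (Dj _ Hx) Rxy).
Qed.

Lemma plus_cross s1 s2 x x' y y' : sub s1 e -> sub s2 e ->
  (forall z, z \in cw_verts s1 -> z \notin cw_verts s2) ->
  x \in cw_verts s1 -> x' \in cw_verts s1 -> y \in cw_verts s2 -> y' \in cw_verts s2 ->
  code s1 x = code s1 x' -> code s2 y = code s2 y' ->
  plus_arc G x y = plus_arc G x' y' /\ plus_arc G y x = plus_arc G y' x'.
Proof.
move=> H1 H2 Dj Hx Hx' Hy Hy' Cx Cy.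
have ne : forall a b, a \in cw_verts s1 -> b \in cw_verts s2 -> (a != b) && (b != a).
  move=> a b Ha Hb; case: eqVneq => [E|] //=; by subst; have := Dj _ Ha; rewrite Hb.
rewrite !(plusE HG); case/andP: (ne _ _ Hx Hy) => -> ->; case/andP: (ne _ _ Hx' Hy') => -> ->.
rewrite !andbT; split; apply/idP/idP.
- exact: (R_cross H1 H2 Dj Hx Hx' Hy Hy' Cx Cy).
- exact: (R_cross H1 H2 Dj Hx' Hx Hy' Hy (esym Cx) (esym Cy)).
- exact: (R_cross' H1 H2 Dj Hx Hx' Hy Hy' Cx Cy).
- exact: (R_cross' H1 H2 Dj Hx' Hx Hy' Hy (esym Cx) (esym Cy)).
Qed.

Lemma edge_cross s1 s2 x x' y y' : sub s1 e -> sub s2 e ->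
  (forall z, z \in cw_verts s1 -> z \notin cw_verts s2) ->
  x \in cw_verts s1 -> x' \in cw_verts s1 -> y \in cw_verts s2 -> y' \in cw_verts s2 ->
  code s1 x = code s1 x' -> code s2 y = code s2 y' ->
  medge (tclosure G) x y = medge (tclosure G) x' y'.
Proof.
move=> H1 H2 Dj Hx Hx' Hy Hy' Cx Cy.
have [P1 P2] := plus_cross H1 H2 Dj Hx Hx' Hy Hy' Cx Cy.
rewrite /tclosure /= P1 P2; congr (_ && _).
have [L1 _ _] := code_eq H1 Hx Hx' Cx; have [L2 _ _] := code_eq H2 Hy Hy' Cy.
have Hy1 : y \notin cw_verts s1 by apply/negP => /Dj; rewrite Hy.
have [_ _ A _] := ctxG H1 Hx Hx' L1 Hy1.
have [_ _ _ B] := ctxG H2 Hy Hy' L2 (Dj _ Hx').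
by rewrite A B.
Qed.

Lemma Dm_spec s1 s2 (rl : rel T) x y :
  (forall x x' y y', x \in cw_verts s1 -> x' \in cw_verts s1 -> y \in cw_verts s2 -> y' \in cw_verts s2 ->
     code s1 x = code s1 x' -> code s2 y = code s2 y' -> rl x y = rl x' y') ->
  x \in cw_verts s1 -> y \in cw_verts s2 -> Dm s1 s2 rl (code s1 x) (code s2 y) = rl x y.
Proof.
move=> Inv Hx Hy; apply/existsP/idP.
- case=> x' /existsP [y' /and5P [Hx' Hy' /eqP Cx /eqP Cy Hr]]; by rewrite -(Inv x' x y' y).
- move=> Hr; exists x; apply/existsP; exists y; by rewrite Hx Hy !eqxx.
Qed.
Lemma has_or (U : Type) (A B : pred U) s : has (fun p => A p || B p) s = has A s || has B s.
Proof. elim: s => //= p s ->; by case: (A p); case: (B p); case: (has A s); case: (has B s). Qed.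

Lemma has_lbl' D r r' ra rb a b :
  has (fun p => (lbl (ra, a) == p.2) && (lbl (rb, b) == p.1)) (pl D r r') = [&& rb == r, ra == r' & D b a].
Proof. rewrite -has_lbl; apply: eq_has => p /=; by rewrite andbC. Qed.

Lemma has_E D r r' ra rb a b :
  has (fun p => [&& true, true, lbl (ra, a) == p.1 & lbl (rb, b) == p.2]
             || [&& true, true, lbl (ra, a) == p.2 & lbl (rb, b) == p.1]) (pl D r r')
  = [&& ra == r, rb == r' & D a b] || [&& rb == r, ra == r' & D b a].
Proof. rewrite has_or; congr (_ || _); [exact: has_lbl | exact: has_lbl']. Qed.

Lemma has_lblT D r r' ra rb a b :
  has (fun p => [&& true, true, lbl (ra, a) == p.1 & lbl (rb, b) == p.2]) (pl D r r')
  = [&& ra == r, rb == r' & D a b].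
Proof. exact: has_lbl. Qed.

Lemma r01 : (r0 == r1) = false. Proof. by []. Qed.
Lemma r10 : (r1 == r0) = false. Proof. by []. Qed.
Lemma r02 : (r0 == r2) = false. Proof. by []. Qed.
Lemma r20 : (r2 == r0) = false. Proof. by []. Qed.
Lemma r12 : (r1 == r2) = false. Proof. by []. Qed.
Lemma r21 : (r2 == r1) = false. Proof. by []. Qed.

Lemma lbl_neq r r' a b : r != r' -> lbl (r, a) != lbl (r', b).
Proof. by move=> H; rewrite lblE xpair_eqE negb_and H. Qed.

Lemma sub_child1 (t1 t2 : cwexp T) : sub t1 (CUnion t1 t2). Proof. right; left; exact: sub_refl. Qed.
Lemma sub_child2 (t1 t2 : cwexp T) : sub t2 (CUnion t1 t2). Proof. right; right; exact: sub_refl. Qed.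

Lemma tr_inv t : sub t e -> [/\ (forall x, x \in cw_verts t -> cw_lab (tr t) x = lbl (r0, code t x)),
  (forall x y, cw_edge (tr t) x y = [&& x \in cw_verts t, y \in cw_verts t & medge (tclosure G) x y]) &
  (forall x y, cw_arc (tr t) x y = [&& x \in cw_verts t, y \in cw_verts t & plus_arc G x y])].
Proof.
case: HG => _ Hirr _ _.
elim: t => [v i|t1 IH1 t2 IH2|i j t0 IH|i j t0 IH|i j t0 IH] Hs.
- split.
  + by move=> x; rewrite inE => /eqP ->.
  + move=> x y /=; rewrite !inE.
    case: eqVneq => // ->; case: eqVneq => // ->; by rewrite (negbTE (Hirr v)).
  + move=> x y /=; rewrite !inE.
    case: eqVneq => // ->; case: eqVneq => // ->; by rewrite (plusE HG) eqxx andbF.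
-
  have Hs1 : sub t1 e := sub_trans (sub_child1 t1 t2) Hs.
  have Hs2 : sub t2 e := sub_trans (sub_child2 t1 t2) Hs.
  have U := sub_uniq Hs Uq; rewrite /= cat_uniq in U; case/and3P: U => _ Dj _.
  have Dj12 : forall z, z \in cw_verts t1 -> z \notin cw_verts t2.
    move=> z Hz; apply/negP => Hz2; case/negP: Dj; apply/hasP; by exists z.
  have Dj21 : forall z, z \in cw_verts t2 -> z \notin cw_verts t1.
    move=> z Hz; apply/negP => Hz1; case/negP: Dj; apply/hasP; by exists z.
  case: (IH1 Hs1) => L1 E1 A1; case: (IH2 Hs2) => L2 E2 A2.
  set f2 := rn (mv r0 r1 id) (tr t2).
  have Lf2 : forall y, y \in cw_verts t2 -> cw_lab f2 y = lbl (r1, code t2 y).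
    move=> y Hy; have [M _] := @mv_lab r0 r1 id (tr t2) y isT; exact: M (L2 _ Hy).
  set u := CUnion (tr t1) f2.
  have Vu : cw_verts u = cw_verts t1 ++ cw_verts t2 by rewrite /= rn_verts !tr_verts.
  have Lu1 : forall x, x \in cw_verts t1 -> cw_lab u x = lbl (r0, code t1 x).
    by move=> x Hx; rewrite /= tr_verts Hx L1.
  have Lu2 : forall x, x \in cw_verts t2 -> cw_lab u x = lbl (r1, code t2 x).
    by move=> x Hx; rewrite /= tr_verts (negbTE (Dj21 _ Hx)) Lf2.
  have Eu : forall x y, cw_edge u x y = [&& x \in cw_verts t1, y \in cw_verts t1 & medge (tclosure G) x y]
      || [&& x \in cw_verts t2, y \in cw_verts t2 & medge (tclosure G) x y].
    by move=> x y; rewrite /= E1 rn_edge E2.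
  have Au : forall x y, cw_arc u x y = [&& x \in cw_verts t1, y \in cw_verts t1 & plus_arc G x y]
      || [&& x \in cw_verts t2, y \in cw_verts t2 & plus_arc G x y].
    by move=> x y; rewrite /= A1 rn_arc A2.
  have DE : forall x y, x \in cw_verts t1 -> y \in cw_verts t2 ->
      Dm t1 t2 (medge (tclosure G)) (code t1 x) (code t2 y) = medge (tclosure G) x y.
    move=> x y Hx Hy; apply: Dm_spec => // a a' b b' Ha Ha' Hb Hb' Ca Cb.
    exact: edge_cross Hs1 Hs2 Dj12 Ha Ha' Hb Hb' Ca Cb.
  have D12 : forall x y, x \in cw_verts t1 -> y \in cw_verts t2 ->
      Dm t1 t2 (plus_arc G) (code t1 x) (code t2 y) = plus_arc G x y.
    move=> x y Hx Hy; apply: Dm_spec => // a a' b b' Ha Ha' Hb Hb' Ca Cb.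
    by case: (plus_cross Hs1 Hs2 Dj12 Ha Ha' Hb Hb' Ca Cb).
  have D21 : forall x y, x \in cw_verts t2 -> y \in cw_verts t1 ->
      Dm t2 t1 (plus_arc G) (code t2 x) (code t1 y) = plus_arc G x y.
    move=> x y Hx Hy; apply: Dm_spec => // a a' b b' Ha Ha' Hb Hb' Ca Cb.
    by case: (plus_cross Hs2 Hs1 Dj21 Ha Ha' Hb Hb' Ca Cb).
  have Vt : forall z, z \in cw_verts (CUnion t1 t2) = (z \in cw_verts t1) || (z \in cw_verts t2).
    by move=> z; rewrite /= mem_cat.
  split.
  +
    move=> x; rewrite Vt => /orP[Hx|Hx].
    * have Inv : forall a a', a \in cw_verts t1 -> a' \in cw_verts t1 -> code t1 a = code t1 a' ->
          code (CUnion t1 t2) a = code (CUnion t1 t2) a'.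
        have Sub1 : {subset cw_verts t1 <= cw_verts (CUnion t1 t2)} by move=> z Hz; rewrite Vt Hz.
        have Lab1 : forall z, z \in cw_verts t1 -> cw_lab (CUnion t1 t2) z = cw_lab t1 z.
          by move=> z Hz; rewrite /= Hz.
        move=> a a'; exact: code_child Hs Hs1 Sub1 Lab1.
      rewrite /= -(gf_code Hx Inv).
      have L0 : cw_lab (alphas (pl (Dm t2 t1 (plus_arc G)) r1 r0) (alphas (pl (Dm t1 t2 (plus_arc G)) r0 r1)
          (etas (pl (Dm t1 t2 (medge (tclosure G))) r0 r1) u))) x = lbl (r0, code t1 x).
        by rewrite !alphas_lab etas_lab Lu1.
      have M02 := proj1 (@mv_lab r0 r2 (gf t1 (CUnion t1 t2)) _ x isT) _ L0.
      apply: (proj1 (@mv_lab r2 r0 id _ x isT)).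
      rewrite (proj2 (@mv_lab r1 r2 (gf t2 (CUnion t1 t2)) _ x isT)) ?M02 //.
      move=> c; exact: lbl_neq.
    * have Inv : forall a a', a \in cw_verts t2 -> a' \in cw_verts t2 -> code t2 a = code t2 a' ->
          code (CUnion t1 t2) a = code (CUnion t1 t2) a'.
        have Sub2 : {subset cw_verts t2 <= cw_verts (CUnion t1 t2)} by move=> z Hz; rewrite Vt Hz orbT.
        have Lab2 : forall z, z \in cw_verts t2 -> cw_lab (CUnion t1 t2) z = cw_lab t2 z.
          by move=> z Hz; rewrite /= (negbTE (Dj21 _ Hz)).
        move=> a a'; exact: code_child Hs Hs2 Sub2 Lab2.
      rewrite /= -(gf_code Hx Inv).
      have L0 : cw_lab (alphas (pl (Dm t2 t1 (plus_arc G)) r1 r0) (alphas (pl (Dm t1 t2 (plus_arc G)) r0 r1)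
          (etas (pl (Dm t1 t2 (medge (tclosure G))) r0 r1) u))) x = lbl (r1, code t2 x).
        by rewrite !alphas_lab etas_lab Lu2.
      apply: (proj1 (@mv_lab r2 r0 id _ x isT)).
      apply: (proj1 (@mv_lab r1 r2 (gf t2 (CUnion t1 t2)) _ x isT)).
      rewrite (proj2 (@mv_lab r0 r2 (gf t1 (CUnion t1 t2)) _ x isT)) // => c; rewrite L0; exact: lbl_neq.
  +
    have Vx : forall z, (z \in cw_verts u) = (z \in cw_verts (CUnion t1 t2)) by move=> z; rewrite Vu.
    move=> x y; rewrite [tr _]/= !rn_edge !alphas_edge.
    case: (boolP ((x \in cw_verts (CUnion t1 t2)) && (y \in cw_verts (CUnion t1 t2)))) => [/andP[Hxt Hyt]|Hn]; last first.
      apply/idP/idP; first by move/edge_verts; rewrite etas_verts !Vx => H; rewrite H in Hn.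
      by case/and3P => a b _; rewrite a b in Hn.
    rewrite Hxt Hyt !andTb etas_edge !Vx Hxt Hyt.
    move: Hxt Hyt; rewrite !Vt => /orP[Hx|Hx] /orP[Hy|Hy].
    * rewrite (Lu1 _ Hx) (Lu1 _ Hy) has_E Eu Hx Hy (negbTE (Dj12 _ Hx)) !eqxx ?r01 ?r10 /=.
      by rewrite !orbF.
    * rewrite (Lu1 _ Hx) (Lu2 _ Hy) has_E DE // Eu Hx Hy (negbTE (Dj12 _ Hx)) (negbTE (Dj21 _ Hy)).
      by rewrite !eqxx ?r01 ?r10 /= ?orbF.
    * rewrite (Lu2 _ Hx) (Lu1 _ Hy) has_E DE // Eu Hx Hy (negbTE (Dj12 _ Hy)) (negbTE (Dj21 _ Hx)).
      rewrite !eqxx ?r01 ?r10 /=.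
      have [HG1 _ _ _] := HG; rewrite HG1.
      by case: (plus_arc G x y); case: (plus_arc G y x); rewrite ?andbF.
    * rewrite (Lu2 _ Hx) (Lu2 _ Hy) has_E Eu Hx Hy (negbTE (Dj21 _ Hx)) !eqxx ?r01 ?r10 /=.
      by rewrite !orbF.
  +
    have Vx : forall z, (z \in cw_verts u) = (z \in cw_verts (CUnion t1 t2)) by move=> z; rewrite Vu.
    move=> x y; rewrite [tr _]/= !rn_arc.
    case: (boolP ((x \in cw_verts (CUnion t1 t2)) && (y \in cw_verts (CUnion t1 t2)))) => [/andP[Hxt Hyt]|Hn]; last first.
      apply/idP/idP; first by move/arc_verts; rewrite !alphas_verts etas_verts !Vx => H; rewrite H in Hn.
      by case/and3P => a b _; rewrite a b in Hn.
    rewrite Hxt Hyt !andTb !alphas_arc etas_arc !alphas_verts !alphas_lab !etas_verts !etas_lab !Vx Hxt Hyt.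
    move: Hxt Hyt; rewrite !Vt => /orP[Hx|Hx] /orP[Hy|Hy].
    * rewrite (Lu1 _ Hx) (Lu1 _ Hy) !has_lblT Au Hx Hy (negbTE (Dj12 _ Hx)) !eqxx ?r01 ?r10 /=.
      by rewrite !orbF.
    * rewrite (Lu1 _ Hx) (Lu2 _ Hy) !has_lblT D12 // Au Hx Hy (negbTE (Dj12 _ Hx)) (negbTE (Dj21 _ Hy)).
      by rewrite !eqxx ?r01 ?r10 /= ?orbF.
    * rewrite (Lu2 _ Hx) (Lu1 _ Hy) !has_lblT D21 // Au Hx Hy (negbTE (Dj12 _ Hy)) (negbTE (Dj21 _ Hx)).
      by rewrite !eqxx ?r01 ?r10 /=.
    * rewrite (Lu2 _ Hx) (Lu2 _ Hy) !has_lblT Au Hx Hy (negbTE (Dj21 _ Hx)) !eqxx ?r01 ?r10 /=.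
      by rewrite !orbF.
- have Hs0 : sub t0 e by apply: sub_trans Hs; right; exact: sub_refl.
  exact: IH Hs0.
- have Hs0 : sub t0 e by apply: sub_trans Hs; right; exact: sub_refl.
  exact: IH Hs0.
- have Hs0 : sub t0 e by apply: sub_trans Hs; right; exact: sub_refl.
  case: (IH Hs0) => L0 E0 A0; split.
  + move=> x Hx; have Hx0 : x \in cw_verts t0 by [].
    rewrite /= -(gf_code Hx0 (fun a a' => code_ren Hs)).
    apply: (proj1 (@mv_lab r2 r0 id _ x isT)).
    exact: (proj1 (@mv_lab r0 r2 (gf t0 (CRename i j t0)) (tr t0) x isT) _ (L0 _ Hx0)).
  + by move=> x y; rewrite /= !rn_edge E0.
  + by move=> x y; rewrite /= !rn_arc A0.
Qed.
Lemma tr_le : cw_le (tclosure G) K.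
Proof.
exists (tr e); split; first exact: tr_uses.
case: He => U Hall _ _; have [_ E A] := tr_inv (sub_refl e).
split; first by rewrite tr_verts.
- by move=> v; rewrite tr_verts.
- by move=> x y; rewrite E !Hall.
- by move=> x y; rewrite A !Hall.
Qed.

End Constr.

Lemma K_bound (k' : nat) : K k' <= 4 ^ k'.+1 * k'.+1.
Proof.
rewrite /K card_prod card_ord.
pose phi (c : {c : 'I_k'.+1 * {set 'I_k'.+1} * {set 'I_k'.+1} | (c.1.1 \in c.1.2) && (c.1.1 \in c.2)})
  : 'I_k'.+1 * {set 'I_k'} * {set 'I_k'} :=
  ((val c).1.1, [set j | lift (val c).1.1 j \in (val c).1.2], [set j | lift (val c).1.1 j \in (val c).2]).
have inj : injective phi.
  move=> [[[a A] B] HAB] [[[a' A'] B'] HAB'] [Ea EA EB]; simpl in *; subst a'.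
  have /andP[HA HB] := HAB; have /andP[HA' HB'] := HAB'.
  apply: val_inj => /=; congr (_, _, _); apply/setP => b.
  - case: (eqVneq a b) => [<-|ne]; first by rewrite HA HA'.
    have [j -> _] := unlift_some ne.
    by have := congr1 (fun S : {set 'I_k'} => (j : 'I_k') \in S) EA; rewrite /= !inE.
  - case: (eqVneq a b) => [<-|ne]; first by rewrite HB HB'.
    have [j -> _] := unlift_some ne.
    by have := congr1 (fun S : {set 'I_k'} => (j : 'I_k') \in S) EB; rewrite /= !inE.
have := @leq_card _ _ phi inj; rewrite !card_prod card_ord.
have Cs : #|{: {set 'I_k'}}| = 2 ^ k' by rewrite -cardsT -powersetT card_powerset cardsT card_ord.
rewrite Cs => H.
have E4 : 4 ^ k'.+1 * k'.+1 = 4 * (k'.+1 * 2 ^ k' * 2 ^ k').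
  have E : 4 ^ k' = 2 ^ k' * 2 ^ k' by rewrite -expnMn.
  rewrite expnS E; lia.
by rewrite E4 leq_mul2l.
Qed.

Lemma exists_min (P : nat -> Prop) : forall n, P n -> exists m, [/\ P m, m <= n & forall j, P j -> m <= j].
Proof.
elim/ltn_ind => n IH Pn.
case: (classic (exists j, P j /\ j < n)) => [[j [Pj ljn]]|N].
- have [m [Pm lmj Hm]] := IH j ljn Pj.
  exists m; split => //; exact: leq_trans lmj (ltnW ljn).
- exists n; split => // j Pj; rewrite leqNgt; apply/negP => ljn; apply: N; by exists j.
Qed.

Theorem mainTheorem18 (T : finType) (G : mgraph T) :
  is_mixed_dag G ->
  nd_m (tclosure G) <= nd_m G /\
  (forall k, is_cwm G k -> exists k', is_cwm (tclosure G) k' /\ k' <= 4 ^ k * k).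
Proof.
move=> HG; split; first exact: nd_part.
move=> k [[e [Hu Hc]] _].
have kpos := uses_pos Hu.
case: k kpos Hu => [//|k'] _ Hu.
have Hle := tr_le HG Hc Hu.
have [m [Pm lm Hm]] := exists_min Hle.
exists m; split; first by split.
exact: leq_trans lm (K_bound k').
Qed.
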